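(* Let $\boldsymbol x^*$ be a pure Nash equilibrium of $\mathcal L(n,S)$ that satisfies the vertex property. Then for every point $w\in S$, \[ \operatorname{card}\{i\in N: x_i^*=w\}\le \operatorname{degree}(w). \]
   Context: Network: $(V,E)$ is a finite connected graph with no vertex of degree $2$; each edge $e$ has a length $\lambda(e)>0$. $S$ is the metric measure space obtained by identifying each edge with a segment of length $\lambda(e)$, with length measure $\lambda$ and shortest-path distance $d$. For $v\in V$, $\operatorname{degree}(v)$ is its graph degree. For a point $x\in S\setminus V$ (interior of an edge), $\operatorname{degree}(x)=2$. Location game $\mathcal L(n,S)$ with player set $N=\{1,\dots,n\}$: each player chooses a point of $S$. Consumers are distributed according to $\lambda$, and each shops at a closest occupied location. Consumers equidistant from several closest occupied locations are split equally among those locations, and the share of a location is split equally among the players located there. A player's payoff is the mass of consumers she attracts. Nash equilibria are pure. A profile satisfies the vertex property if every vertex of degree $\ge3$ is occupied by at least one player. *)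

(* Defs.v *)
From Stdlib Require Import Reals Lra Lia List Classical ClassicalEpsilon.
Import ListNotations.
Open Scope R_scope.

(* The segment of edge e is parametrised by t in [0, lam e],
   t = 0 being the endpoint [esrc E e], t = lam e the endpoint [edst E e]. *)

Definition esrc (E : list (nat * nat)) (e : nat) : nat := fst (nth e E (0%nat, 0%nat)).
Definition edst (E : list (nat * nat)) (e : nat) : nat := snd (nth e E (0%nat, 0%nat)).

Fixpoint countP (P : nat -> Prop) (m : nat) : nat :=
  match m with
  | O => O
  | S k => (countP P k + (if excluded_middle_informative (P k) then 1 else 0))%nat
  end.

Fixpoint sumR (f : nat -> R) (m : nat) : R :=
  match m with
  | O => 0
  | S k => sumR f k + f k
  end.

Definition vdegree (E : list (nat * nat)) (v : nat) : nat :=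
  countP (fun e => esrc E e = v \/ edst E e = v) (length E).

Inductive WalkLen (E : list (nat * nat)) (lam : nat -> R) : nat -> nat -> R -> Prop :=
  | walk_nil : forall u, WalkLen E lam u u 0
  | walk_fwd : forall e w L, (e < length E)%nat ->
      WalkLen E lam (edst E e) w L -> WalkLen E lam (esrc E e) w (lam e + L)
  | walk_bwd : forall e w L, (e < length E)%nat ->
      WalkLen E lam (esrc E e) w L -> WalkLen E lam (edst E e) w (lam e + L).

Definition network (nV : nat) (E : list (nat * nat)) (lam : nat -> R) : Prop :=
  (1 <= length E)%nat /\
  (forall e, (e < length E)%nat ->
     (esrc E e < nV)%nat /\ (edst E e < nV)%nat /\ esrc E e <> edst E e /\ 0 < lam e) /\
  (forall e f, (e < f)%nat -> (f < length E)%nat ->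
     ~ ((esrc E e = esrc E f /\ edst E e = edst E f) \/
        (esrc E e = edst E f /\ edst E e = esrc E f))) /\
  (forall u v, (u < nV)%nat -> (v < nV)%nat -> exists L, WalkLen E lam u v L) /\
  (forall v, (v < nV)%nat -> vdegree E v <> 2%nat).

Inductive Pt : Type :=
  | PV : nat -> Pt
  | PE : nat -> R -> Pt.    (* interior point of edge e at position t, 0 < t < lam e *)

Definition valid_pt (nV : nat) (E : list (nat * nat)) (lam : nat -> R) (x : Pt) : Prop :=
  match x with
  | PV v => (v < nV)%nat
  | PE e t => (e < length E)%nat /\ 0 < t < lam e
  end.

Definition pt_of (E : list (nat * nat)) (lam : nat -> R) (e : nat) (t : R) : Pt :=
  if Rle_dec t 0 then PV (esrc E e)
  else if Rle_dec (lam e) t then PV (edst E e)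
  else PE e t.

Definition degree (E : list (nat * nat)) (x : Pt) : nat :=
  match x with
  | PV v => vdegree E v
  | PE _ _ => 2%nat
  end.

Definition is_glb (A : R -> Prop) (m : R) : Prop :=
  (forall a, A a -> m <= a) /\ (forall m', (forall a, A a -> m' <= a) -> m' <= m).

Definition dV (E : list (nat * nat)) (lam : nat -> R) (u v : nat) : R :=
  epsilon (inhabits 0) (fun m => is_glb (WalkLen E lam u v) m).

(* shortest-path distance on S: a path between two points leaves an edge
   interior only through its endpoints *)
Definition dist (E : list (nat * nat)) (lam : nat -> R) (x y : Pt) : R :=
  let d := dV E lam in
  match x, y with
  | PV u, PV v => d u v
  | PV u, PE f t => Rmin (t + d u (esrc E f)) (lam f - t + d u (edst E f))
  | PE e s, PV v => Rmin (s + d (esrc E e) v) (lam e - s + d (edst E e) v)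
  | PE e s, PE f t =>
      let via := Rmin (Rmin (s + d (esrc E e) (esrc E f) + t)
                            (s + d (esrc E e) (edst E f) + (lam f - t)))
                      (Rmin ((lam e - s) + d (edst E e) (esrc E f) + t)
                            ((lam e - s) + d (edst E e) (edst E f) + (lam f - t))) in
      if Nat.eq_dec e f then Rmin (Rabs (s - t)) via else via
  end.

(* players are 0 .. n-1; a profile is x : nat -> Pt (values at i >= n irrelevant) *)

Definition share (E : list (nat * nat)) (lam : nat -> R) (n : nat) (x : nat -> Pt)
    (i : nat) (y : Pt) : R :=
  let closest (z : Pt) := forall j, (j < n)%nat -> dist E lam y z <= dist E lam y (x j) in
  (* number of distinct closest occupied locations (first occurrences) *)
  let ncl := countP (fun j => closest (x j) /\ forall k, (k < j)%nat -> x k <> x j) n in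
  let nat_i := countP (fun j => x j = x i) n in
  if excluded_middle_informative (closest (x i))
  then / (INR ncl * INR nat_i) else 0.

(* Riemann integral (the integrands here are piecewise constant) *)
Definition integ (f : R -> R) (a b : R) : R :=
  match excluded_middle_informative (inhabited (Riemann_integrable f a b)) with
  | left H => RiemannInt (epsilon H (fun _ => True))
  | right _ => 0
  end.

Definition payoff (E : list (nat * nat)) (lam : nat -> R) (n : nat) (x : nat -> Pt)
    (i : nat) : R :=
  sumR (fun e => integ (fun t => share E lam n x i (pt_of E lam e t)) 0 (lam e)) (length E).

Definition upd (x : nat -> Pt) (i : nat) (y : Pt) : nat -> Pt :=
  fun j => if Nat.eq_dec j i then y else x j.

Definition nash (nV : nat) (E : list (nat * nat)) (lam : nat -> R) (n : nat)
    (x : nat -> Pt) : Prop :=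
  (forall i, (i < n)%nat -> valid_pt nV E lam (x i)) /\
  forall i y, (i < n)%nat -> valid_pt nV E lam y ->
    payoff E lam n (upd x i y) i <= payoff E lam n x i.

Definition vertex_property (nV : nat) (E : list (nat * nat)) (n : nat) (x : nat -> Pt) : Prop :=
  forall v, (v < nV)%nat -> (3 <= vdegree E v)%nat -> exists i, (i < n)%nat /\ x i = PV v.

(* Main.v *)
Require Import Defs.
From Stdlib Require Import Reals.
From Coquelicot Require Import Coquelicot.
From Stdlib Require Import Reals Lra Lia List Classical ClassicalEpsilon.
Require Import Defs.
Open Scope R_scope.

Lemma countP_ext (P Q : nat -> Prop) m :
  (forall k, (k < m)%nat -> (P k <-> Q k)) -> countP P m = countP Q m.
Proof.
  induction m; simpl; intros H; auto.
  rewrite IHm by (intros; apply H; lia).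
  destruct (excluded_middle_informative (P m)), (excluded_middle_informative (Q m)); auto;
  exfalso; [apply n | apply n]; apply H; auto; lia.
Qed.

Lemma countP_le P m : (countP P m <= m)%nat.
Proof. induction m; simpl; auto. destruct (excluded_middle_informative (P m)); lia. Qed.

Lemma countP_pos (P : nat -> Prop) m : (exists k, (k < m)%nat /\ P k) -> (1 <= countP P m)%nat.
Proof.
  induction m; simpl; intros [k [Hk Pk]]; [lia|].
  destruct (excluded_middle_informative (P m)); [lia|].
  assert (k <> m) by (intro; subst; auto).
  assert (1 <= countP P m)%nat by (apply IHm; exists k; split; auto; lia). lia.
Qed.

Lemma countP_exists (P : nat -> Prop) m : (1 <= countP P m)%nat -> exists k, (k < m)%nat /\ P k.
Proof.
  induction m; simpl; intros H; [lia|].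
  destruct (excluded_middle_informative (P m)).
  - exists m; split; auto.
  - destruct IHm as [k [Hk Pk]]; [lia|]. exists k; split; auto.
Qed.

Lemma countP_none (P : nat -> Prop) m : (forall k, (k < m)%nat -> ~ P k) -> countP P m = 0%nat.
Proof.
  intros H. destruct (countP P m) eqn:E; auto.
  destruct (countP_exists P m) as [k [Hk Pk]]; [lia|]. exfalso; eapply H; eauto.
Qed.

Lemma countP_unique (P : nat -> Prop) m i0 : (i0 < m)%nat ->
  (forall k, (k < m)%nat -> (P k <-> k = i0)) -> countP P m = 1%nat.
Proof.
  induction m; intros Hi H; [lia|]. simpl.
  destruct (Nat.eq_dec i0 m).
  - subst. rewrite countP_none.
    + destruct (excluded_middle_informative (P m)); auto. exfalso; apply n; apply H; auto.
    + intros k Hk Pk. apply H in Pk; lia.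
  - rewrite IHm; [ | lia | intros; apply H; lia].
    destruct (excluded_middle_informative (P m)); auto.
    apply H in p; [lia | lia].
Qed.

Lemma countP_True m : countP (fun _ => True) m = m.
Proof. induction m; simpl; auto. destruct (excluded_middle_informative True); [lia| tauto]. Qed.

Lemma first_occ (x : nat -> Pt) w n : (exists j, (j < n)%nat /\ x j = w) ->
  exists j, (j < n)%nat /\ x j = w /\ forall k, (k < j)%nat -> x k <> w.
Proof.
  induction n; intros [j [Hj Ej]]; [lia|].
  destruct (classic (exists j, (j < n)%nat /\ x j = w)) as [Hx|Hx].
  - destruct (IHn Hx) as [j' [? [? ?]]]. exists j'; repeat split; auto.
  - assert (j = n). { destruct (Nat.eq_dec j n); auto. exfalso; apply Hx; exists j; split; auto; lia. }
    subst. exists n; repeat split; auto. intros k Hk Ek. apply Hx; exists k; auto.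
Qed.

Lemma sumR_ext f g m : (forall k, (k < m)%nat -> f k = g k) -> sumR f m = sumR g m.
Proof. induction m; simpl; intros; auto. rewrite IHm, H; auto. Qed.

Lemma sumR_le f g m : (forall k, (k < m)%nat -> f k <= g k) -> sumR f m <= sumR g m.
Proof. induction m; simpl; intros; [lra|]. assert (f m <= g m) by auto. assert (sumR f m <= sumR g m) by auto. lra. Qed.

Lemma sumR_plus f g m : sumR (fun k => f k + g k) m = sumR f m + sumR g m.
Proof. induction m; simpl; [lra|]. rewrite IHm; lra. Qed.

Lemma sumR_scal c f m : sumR (fun k => c * f k) m = c * sumR f m.
Proof. induction m; simpl; [lra|]. rewrite IHm; lra. Qed.

Lemma sumR_nonneg f m : (forall k, (k < m)%nat -> 0 <= f k) -> 0 <= sumR f m.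
Proof. induction m; simpl; intros; [lra|]. assert (0 <= f m) by auto. assert (0 <= sumR f m) by auto. lra. Qed.

Lemma sumR_ge_term f m k : (forall k, (k < m)%nat -> 0 <= f k) -> (k < m)%nat -> f k <= sumR f m.
Proof.
  induction m; simpl; intros; [lia|].
  destruct (Nat.eq_dec k m).
  - subst. assert (0 <= sumR f m) by (apply sumR_nonneg; auto). lra.
  - assert (f k <= sumR f m) by (apply IHm; auto; lia). assert (0 <= f m) by auto. lra.
Qed.

Lemma sumR_swap (F : nat -> nat -> R) m1 m2 :
  sumR (fun a => sumR (fun b => F a b) m2) m1 = sumR (fun b => sumR (fun a => F a b) m1) m2.
Proof.
  induction m1; simpl.
  - induction m2; simpl; [lra|]. rewrite <- IHm2; lra.
  - rewrite IHm1. rewrite <- sumR_plus. apply sumR_ext. intros; simpl; lra.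
Qed.

Lemma sumR_cond_bound (Q : nat -> Prop) (F : nat -> R) m P :
  (forall e, (e < m)%nat -> Q e -> F e <= P) ->
  sumR (fun e => if excluded_middle_informative (Q e) then F e else 0) m <= INR (countP Q m) * P.
Proof.
  induction m; simpl; intros H; [lra|].
  rewrite plus_INR. destruct (excluded_middle_informative (Q m)).
  - assert (F m <= P) by auto. assert (sumR _ m <= INR (countP Q m) * P) by (apply IHm; auto). simpl; lra.
  - assert (sumR _ m <= INR (countP Q m) * P) by (apply IHm; auto). simpl; lra.
Qed.

Lemma ex_RInt_const_on (g : R -> R) a b c : a <= b ->
  (forall t, a < t < b -> g t = c) -> ex_RInt g a b.
Proof.
  intros Hab H. apply ex_RInt_ext with (f := fun _ => c); [|apply ex_RInt_const].
  intros t Ht. rewrite Rmin_left in Ht by lra. rewrite Rmax_right in Ht by lra. symmetry; auto.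
Qed.

Lemma ex_RInt_locconst (g : R -> R) a b : a < b ->
  (forall t0, a <= t0 < b -> exists d, 0 < d /\ exists c, forall t, t0 < t < t0 + d -> t < b -> g t = c) ->
  (forall t0, a < t0 <= b -> exists d, 0 < d /\ exists c, forall t, t0 - d < t < t0 -> a < t -> g t = c) ->
  ex_RInt g a b.
Proof.
  intros Hab HR HL.
  set (S := fun c => a <= c <= b /\ ex_RInt g a c).
  assert (HS : bound S). { exists b. intros c [Hc _]; lra. }
  assert (Ha : exists c, S c). { exists a. split; [lra|]. apply ex_RInt_point. }
  destruct (completeness S HS Ha) as [cs [Hub Hlub]].
  assert (Hacs : a <= cs). { apply Hub. split; [lra|apply ex_RInt_point]. }
  assert (Hcsb : cs <= b). { apply Hlub. intros c [Hc _]; lra. }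
  assert (Hex : ex_RInt g a cs).
  { destruct (Req_dec cs a) as [E|E]. { rewrite E; apply ex_RInt_point. }
    destruct (HL cs) as [d [Hd [c Hc]]]; [lra|].
    set (d' := Rmin d (cs - a)).
    assert (Hd' : 0 < d') by (unfold d'; apply Rmin_glb_lt; lra).
    assert (exists s, S s /\ cs - d' < s).
    { apply NNPP; intro N. assert (cs <= cs - d'); [|lra].
      apply Hlub. intros s Ss. apply Rnot_lt_le. intro Hs. apply N; exists s; auto. }
    destruct H as [s [[Hs1 Hs2] Hs3]].
    assert (s <= cs) by (apply Hub; split; auto).
    apply ex_RInt_Chasles with s; auto.
    apply ex_RInt_const_on with c; auto.
    intros t Ht. apply Hc; [|lra].
    assert (d' <= d) by apply Rmin_l. lra. }
  destruct (Rle_lt_dec b cs) as [Hb|Hb].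
  { replace b with cs by lra. auto. }
  destruct (HR cs) as [d [Hd [c Hc]]]; [lra|].
  set (d' := Rmin d (b - cs)).
  assert (Hd' : 0 < d') by (unfold d'; apply Rmin_glb_lt; lra).
  assert (d' <= d) by apply Rmin_l. assert (d' <= b - cs) by apply Rmin_r.
  assert (S (cs + d'/2)).
  { split; [lra|]. apply ex_RInt_Chasles with cs; auto.
    apply ex_RInt_const_on with c; [lra|]. intros t Ht. apply Hc; lra. }
  apply Hub in H1. lra.
Qed.

Definition OA (h : R -> R) (t0 s : R) : Prop :=
  exists d a b, 0 < d /\ forall u, 0 < u < d -> h (t0 + s * u) = a + b * u.

Lemma OA_lin c k t0 s : OA (fun t => c + k * t) t0 s.
Proof. exists 1, (c + k * t0), (k * s). split; [lra|]. intros; ring. Qed.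

Lemma OA_ext h1 h2 t0 s : (forall t, h1 t = h2 t) -> OA h1 t0 s -> OA h2 t0 s.
Proof. intros E [d [a [b [Hd H]]]]. exists d, a, b; split; auto. intros; rewrite <- E; auto. Qed.

Lemma OA_plus h1 h2 t0 s : OA h1 t0 s -> OA h2 t0 s -> OA (fun t => h1 t + h2 t) t0 s.
Proof.
  intros [d1 [a1 [b1 [H1 E1]]]] [d2 [a2 [b2 [H2 E2]]]].
  exists (Rmin d1 d2), (a1 + a2), (b1 + b2). split; [apply Rmin_glb_lt; auto|].
  intros u Hu. assert (Rmin d1 d2 <= d1) by apply Rmin_l. assert (Rmin d1 d2 <= d2) by apply Rmin_r.
  rewrite E1, E2 by lra. ring.
Qed.

Lemma OA_opp h t0 s : OA h t0 s -> OA (fun t => - h t) t0 s.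
Proof. intros [d [a [b [H E]]]]. exists d, (-a), (-b); split; auto. intros; rewrite E; auto; ring. Qed.

Lemma sign_aff a b d : 0 < d -> exists d', 0 < d' <= d /\
  ((forall u, 0 < u < d' -> a + b * u <= 0) \/ (forall u, 0 < u < d' -> a + b * u > 0)).
Proof.
  intros Hd. destruct (Rtotal_order b 0) as [Hb|[Hb|Hb]].
  - destruct (Rle_dec a 0).
    + exists d; split; [lra|]. left; intros u Hu. nra.
    + exists (Rmin d (a / (-b))). assert (0 < a / - b) by (apply Rdiv_lt_0_compat; lra).
      split; [split; [apply Rmin_glb_lt; lra | apply Rmin_l]|]. right; intros u Hu.
      assert (u < a / - b) by (assert (Rmin d (a / - b) <= a / - b) by apply Rmin_r; lra).
      assert ((-b) * u < (-b) * (a / - b)) by (apply Rmult_lt_compat_l; lra).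
      replace ((-b) * (a / - b)) with a in H1 by (field; lra). lra.
  - subst. exists d; split; [lra|]. destruct (Rle_dec a 0); [left|right]; intros; lra.
  - destruct (Rle_dec 0 a).
    + exists d; split; [lra|]. right; intros u Hu. nra.
    + exists (Rmin d (- a / b)). assert (0 < - a / b) by (apply Rdiv_lt_0_compat; lra).
      split; [split; [apply Rmin_glb_lt; lra | apply Rmin_l]|]. left; intros u Hu.
      assert (u < - a / b) by (assert (Rmin d (- a / b) <= - a / b) by apply Rmin_r; lra).
      assert (b * u < b * (- a / b)) by (apply Rmult_lt_compat_l; lra).
      replace (b * (- a / b)) with (-a) in H1 by (field; lra). lra.
Qed.

Lemma OA_sign h t0 s : OA h t0 s -> exists d, 0 < d /\
  ((forall u, 0 < u < d -> h (t0 + s * u) <= 0) \/ (forall u, 0 < u < d -> h (t0 + s * u) > 0)).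
Proof.
  intros [d [a [b [Hd E]]]]. destruct (sign_aff a b d Hd) as [d' [Hd' [H|H]]].
  - exists d'; split; [lra|]. left; intros u Hu; rewrite E by lra; auto.
  - exists d'; split; [lra|]. right; intros u Hu; rewrite E by lra; auto.
Qed.

Lemma OA_min h1 h2 t0 s : OA h1 t0 s -> OA h2 t0 s -> OA (fun t => Rmin (h1 t) (h2 t)) t0 s.
Proof.
  intros [d1 [a1 [b1 [H1 E1]]]] [d2 [a2 [b2 [H2 E2]]]].
  set (d := Rmin d1 d2). assert (Hd : 0 < d) by (apply Rmin_glb_lt; auto).
  assert (d <= d1) by apply Rmin_l. assert (d <= d2) by apply Rmin_r.
  destruct (sign_aff (a1 - a2) (b1 - b2) d Hd) as [d' [Hd' [HH|HH]]].
  - exists d', a1, b1; split; [lra|]. intros u Hu. specialize (HH u Hu).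
    rewrite E1, E2 by lra. apply Rmin_left. lra.
  - exists d', a2, b2; split; [lra|]. intros u Hu. specialize (HH u Hu).
    rewrite E1, E2 by lra. apply Rmin_right. lra.
Qed.

Lemma OA_abs h t0 s : OA h t0 s -> OA (fun t => Rabs (h t)) t0 s.
Proof.
  intros HA. apply OA_ext with (fun t => - Rmin (h t) (- h t)).
  - intros t. unfold Rmin. destruct (Rle_dec (h t) (- h t)).
    + rewrite Rabs_left1; lra.
    + rewrite Rabs_right; lra.
  - apply OA_opp, OA_min; auto. apply OA_opp; auto.
Qed.

Ltac oa_lin := match goal with |- OA ?h _ _ =>
  apply OA_ext with (fun t => (h 0) + (h 1 - h 0) * t); [intros; simpl; ring | apply OA_lin] end.

Section Net.
Variables (E : list (nat * nat)) (lam : nat -> R) (n : nat).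

Lemma OA_dist p f t0 s : OA (fun t => dist E lam (PE f t) p) t0 s.
Proof.
  destruct p as [v|g s']; cbv beta iota zeta delta [dist].
  - apply OA_min; oa_lin.
  - destruct (Nat.eq_dec f g).
    + apply OA_min. apply OA_abs; oa_lin. apply OA_min; apply OA_min; oa_lin.
    + apply OA_min; apply OA_min; oa_lin.
Qed.

Lemma share_ext p i y1 y2 : (i < n)%nat ->
  (forall j m, (j < n)%nat -> (m < n)%nat ->
     (dist E lam y1 (p j) <= dist E lam y1 (p m) <-> dist E lam y2 (p j) <= dist E lam y2 (p m))) ->
  share E lam n p i y1 = share E lam n p i y2.
Proof.
  intros Hi H. unfold share. cbv zeta.
  rewrite (countP_ext _ (fun j => (forall j0, (j0 < n)%nat -> dist E lam y2 (p j) <= dist E lam y2 (p j0)) /\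
      (forall k, (k < j)%nat -> p k <> p j)) n).
  2:{ intros k Hk. split; intros [A B]; split; auto; intros j0 Hj0; apply H; auto. }
  destruct (excluded_middle_informative _) as [A|A]; destruct (excluded_middle_informative _) as [B|B]; auto.
  - exfalso; apply B; intros j0 Hj0; apply H; auto.
  - exfalso; apply A; intros j0 Hj0; apply H; auto.
Qed.

End Net.

Lemma fin_delta (P : nat -> R -> Prop) m :
  (forall j, (j < m)%nat -> exists d, 0 < d /\ P j d) ->
  (forall j d d', 0 < d' <= d -> P j d -> P j d') ->
  exists d, 0 < d /\ forall j, (j < m)%nat -> P j d.
Proof.
  intros H Hm. induction m.
  - exists 1; split; [lra|]; intros; lia.
  - destruct IHm as [d1 [Hd1 H1]]; [intros; apply H; lia|].
    destruct (H m) as [d2 [Hd2 H2]]; [lia|].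
    exists (Rmin d1 d2). assert (0 < Rmin d1 d2) by (apply Rmin_glb_lt; auto).
    assert (Rmin d1 d2 <= d1) by apply Rmin_l. assert (Rmin d1 d2 <= d2) by apply Rmin_r.
    split; auto. intros j Hj. destruct (Nat.eq_dec j m).
    + subst. apply Hm with d2; auto.
    + apply Hm with d1; auto. apply H1; lia.
Qed.

Section Net2.
Variables (E : list (nat * nat)) (lam : nat -> R) (n : nat).

Lemma share_OA p i f t0 s : (i < n)%nat -> exists d, 0 < d /\
  forall u1 u2, 0 < u1 < d -> 0 < u2 < d ->
    share E lam n p i (PE f (t0 + s * u1)) = share E lam n p i (PE f (t0 + s * u2)).
Proof.
  intros Hi.
  set (Q := fun j d => forall m, (m < n)%nat -> forall u1 u2, 0 < u1 < d -> 0 < u2 < d ->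
     (dist E lam (PE f (t0 + s * u1)) (p j) <= dist E lam (PE f (t0 + s * u1)) (p m) <->
      dist E lam (PE f (t0 + s * u2)) (p j) <= dist E lam (PE f (t0 + s * u2)) (p m))).
  destruct (fin_delta Q n) as [d [Hd HQ]].
  - intros j Hj. unfold Q.
    apply fin_delta.
    + intros m Hm.
      assert (OA (fun t => dist E lam (PE f t) (p j) + - dist E lam (PE f t) (p m)) t0 s)
        by (apply OA_plus; [|apply OA_opp]; apply OA_dist).
      destruct (OA_sign _ _ _ H) as [d [Hd [HH|HH]]]; exists d; split; auto; intros u1 u2 U1 U2;
        pose proof (HH u1 U1); pose proof (HH u2 U2); simpl in *; lra.
    + intros m d d' Hd' HH u1 u2 U1 U2. apply HH; lra.
  - intros j d d' Hd' HH m Hm u1 u2 U1 U2. apply HH; auto; lra.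
  - exists d; split; auto. intros u1 u2 U1 U2. apply share_ext; auto.
    intros j m Hj Hm. apply HQ; auto.
Qed.

Lemma pt_of_int f t : 0 < t < lam f -> pt_of E lam f t = PE f t.
Proof. intros H. unfold pt_of. destruct (Rle_dec t 0); [lra|]. destruct (Rle_dec (lam f) t); [lra|]. auto. Qed.

Lemma sh_int p i f : (i < n)%nat -> 0 < lam f ->
  ex_RInt (fun t => share E lam n p i (pt_of E lam f t)) 0 (lam f).
Proof.
  intros Hi Hf. apply ex_RInt_locconst; auto.
  - intros t0 Ht0. destruct (share_OA p i f t0 1 Hi) as [d [Hd H]].
    exists d; split; auto. exists (share E lam n p i (PE f (t0 + 1 * (d/2)))).
    intros t Ht Htb. rewrite pt_of_int by lra.
    replace t with (t0 + 1 * (t - t0)) by ring. apply H; lra.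
  - intros t0 Ht0. destruct (share_OA p i f t0 (-1) Hi) as [d [Hd H]].
    exists d; split; auto. exists (share E lam n p i (PE f (t0 + -1 * (d/2)))).
    intros t Ht Hta. rewrite pt_of_int by lra.
    replace t with (t0 + -1 * (t0 - t)) by ring. apply H; lra.
Qed.

End Net2.

Lemma integ_RInt f a b : ex_RInt f a b -> integ f a b = RInt f a b.
Proof.
  intros H. unfold integ. destruct (excluded_middle_informative _) as [I|I].
  - symmetry. apply RInt_Reals.
  - exfalso. apply I. constructor. apply ex_RInt_Reals_0; auto.
Qed.

Section Walks.
Variables (nV : nat) (E : list (nat * nat)) (lam : nat -> R).
Hypothesis Hnet : network nV E lam.

Lemma edge_ok e : (e < length E)%nat ->
  (esrc E e < nV)%nat /\ (edst E e < nV)%nat /\ esrc E e <> edst E e /\ 0 < lam e.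
Proof. destruct Hnet as [_ [H _]]. apply H. Qed.

Lemma walk_nonneg u v L : WalkLen E lam u v L -> 0 <= L.
Proof.
  induction 1; [lra| |]; destruct (edge_ok e H) as [_ [_ [_ He]]]; lra.
Qed.

Lemma lmin_ex : exists mu, 0 < mu /\ forall e, (e < length E)%nat -> mu <= lam e.
Proof.
  assert (forall m, (m <= length E)%nat -> exists mu, 0 < mu /\ forall e, (e < m)%nat -> mu <= lam e).
  { induction m; intros Hm.
    - exists 1; split; [lra|]; intros; lia.
    - destruct IHm as [mu [Hmu H]]; [lia|].
      destruct (edge_ok m) as [_ [_ [_ Hl]]]; [lia|].
      exists (Rmin mu (lam m)). split; [apply Rmin_glb_lt; auto|].
      intros e He. destruct (Nat.eq_dec e m); [subst; apply Rmin_r|].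
      eapply Rle_trans; [apply Rmin_l|]. apply H; lia. }
  apply H; lia.
Qed.

Lemma walk_pos mu u v L : (forall e, (e < length E)%nat -> mu <= lam e) ->
  WalkLen E lam u v L -> u <> v -> mu <= L.
Proof.
  intros Hmu W. destruct W; intros Hne; [congruence| |];
  pose proof (Hmu e H); pose proof (walk_nonneg _ _ _ W); lra.
Qed.

Lemma walk_last u v L : WalkLen E lam u v L ->
  (u = v /\ L = 0) \/
  exists e u' L', (e < length E)%nat /\
    ((esrc E e = u' /\ edst E e = v) \/ (edst E e = u' /\ esrc E e = v)) /\
    WalkLen E lam u u' L' /\ L = L' + lam e.
Proof.
  induction 1.
  - left; auto.
  - right. destruct IHWalkLen as [[E1 E2]|[e' [u' [L' [He' [Hd [W' EL]]]]]]].
    + exists e, (esrc E e), 0. repeat split; auto. constructor. lra.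
    + exists e', u', (lam e + L'). repeat split; auto. apply walk_fwd; auto. lra.
  - right. destruct IHWalkLen as [[E1 E2]|[e' [u' [L' [He' [Hd [W' EL]]]]]]].
    + exists e, (edst E e), 0. repeat split; auto. constructor. lra.
    + exists e', u', (lam e + L'). repeat split; auto. apply walk_bwd; auto. lra.
Qed.

Lemma dV_glb u v : (u < nV)%nat -> (v < nV)%nat -> is_glb (WalkLen E lam u v) (dV E lam u v).
Proof.
  intros Hu Hv. unfold dV. apply epsilon_spec.
  destruct Hnet as [_ [_ [_ [Hc _]]]]. destruct (Hc u v Hu Hv) as [L0 W0].
  set (S := fun y => exists L, WalkLen E lam u v L /\ y = - L).
  assert (HB : bound S). { exists 0. intros y [L [W ->]]. pose proof (walk_nonneg _ _ _ W); lra. }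
  assert (HS : exists y, S y) by (exists (- L0), L0; auto).
  destruct (completeness S HB HS) as [M [Hub Hlub]].
  exists (- M). split.
  - intros a Wa. assert (- a <= M) by (apply Hub; exists a; auto). lra.
  - intros m' Hm'. assert (M <= - m'); [|lra]. apply Hlub. intros y [L [W ->]].
    pose proof (Hm' L W); lra.
Qed.

Lemma dV_le u v L : (u < nV)%nat -> (v < nV)%nat -> WalkLen E lam u v L -> dV E lam u v <= L.
Proof. intros Hu Hv W. apply (dV_glb u v Hu Hv); auto. Qed.

Lemma dV_nonneg u v : (u < nV)%nat -> (v < nV)%nat -> 0 <= dV E lam u v.
Proof. intros Hu Hv. apply (dV_glb u v Hu Hv). intros; eapply walk_nonneg; eauto. Qed.

Lemma dV_refl u : (u < nV)%nat -> dV E lam u u <= 0.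
Proof. intros Hu. apply dV_le; auto. constructor. Qed.

Lemma dV_pos mu u v : (forall e, (e < length E)%nat -> mu <= lam e) ->
  (u < nV)%nat -> (v < nV)%nat -> u <> v -> mu <= dV E lam u v.
Proof. intros Hmu Hu Hv Hne. apply (dV_glb u v Hu Hv). intros; eapply walk_pos; eauto. Qed.

Lemma dV_approx u v eta : (u < nV)%nat -> (v < nV)%nat -> 0 < eta ->
  exists L, WalkLen E lam u v L /\ L < dV E lam u v + eta.
Proof.
  intros Hu Hv He. apply NNPP; intro N.
  assert (dV E lam u v + eta <= dV E lam u v); [|lra].
  apply (dV_glb u v Hu Hv). intros a Wa. apply Rnot_lt_le. intro Ha. apply N; exists a; auto.
Qed.

End Walks.

Lemma ex_RInt_plusR f g a b : ex_RInt f a b -> ex_RInt g a b -> ex_RInt (fun x => f x + g x) a b.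
Proof. intros; exact (ex_RInt_plus f g a b H H0). Qed.
Lemma RInt_plusR f g a b : ex_RInt f a b -> ex_RInt g a b ->
  RInt (fun x => f x + g x) a b = RInt f a b + RInt g a b.
Proof. intros; exact (RInt_plus f g a b H H0). Qed.
Lemma ex_RInt_scalR f a b k : ex_RInt f a b -> ex_RInt (fun x => k * f x) a b.
Proof. intros; exact (ex_RInt_scal f a b k H). Qed.
Lemma RInt_scalR f a b k : ex_RInt f a b -> RInt (fun x => k * f x) a b = k * RInt f a b.
Proof. intros; exact (RInt_scal f a b k H). Qed.
Lemma RInt_zero a b : RInt (fun _ => 0) a b = 0.
Proof. rewrite RInt_const. simpl. unfold scal; simpl. unfold mult; simpl. ring. Qed.

Lemma RInt_sumR (F : nat -> R -> R) m a b : (forall e, (e < m)%nat -> ex_RInt (F e) a b) ->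
  ex_RInt (fun t => sumR (fun e => F e t) m) a b /\
  RInt (fun t => sumR (fun e => F e t) m) a b = sumR (fun e => RInt (F e) a b) m.
Proof.
  induction m; intros H; simpl.
  - split; [apply ex_RInt_const| apply RInt_zero].
  - destruct IHm as [I1 I2]; [intros; apply H; lia|].
    split; [apply ex_RInt_plusR; auto; apply H; lia|].
    rewrite (RInt_plusR _ (F m) _ _ I1 (H m ltac:(lia))). rewrite I2. auto.
Qed.

Lemma sumR_zero m : sumR (fun _ => 0) m = 0.
Proof. induction m; simpl; [auto| rewrite IHm; ring]. Qed.

Section Core.
Variables (nV : nat) (E : list (nat * nat)) (lam : nat -> R) (n : nat) (x : nat -> Pt) (i0 : nat).
Hypothesis Hnet : network nV E lam.
Hypothesis Hnash : nash nV E lam n x.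
Hypothesis Hi0 : (i0 < n)%nat.

Definition sh (p : nat -> Pt) (f : nat) (t : R) := share E lam n p i0 (pt_of E lam f t).

Lemma lam_pos f : (f < length E)%nat -> 0 < lam f.
Proof. intros H. destruct (edge_ok nV E lam Hnet f H) as [_ [_ [_ ?]]]; auto. Qed.

Lemma sh_ex p f : (f < length E)%nat -> ex_RInt (sh p f) 0 (lam f).
Proof. intros Hf. apply sh_int; auto. apply lam_pos; auto. Qed.

Lemma payoff_RInt p : payoff E lam n p i0 = sumR (fun f => RInt (sh p f) 0 (lam f)) (length E).
Proof. unfold payoff. apply sumR_ext. intros f Hf. apply integ_RInt. apply sh_ex; auto. Qed.

Lemma core (K m : nat) (Q : nat -> Prop) (Y : nat -> Pt) (c rho : R) (G : nat -> R -> R) :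
  (forall e, (e < m)%nat -> Q e -> valid_pt nV E lam (Y e)) ->
  (forall f, (f < length E)%nat -> ex_RInt (G f) 0 (lam f)) ->
  (forall f, (f < length E)%nat -> RInt (G f) 0 (lam f) <= c) ->
  (forall f t, (f < length E)%nat -> 0 < t < lam f ->
     INR K * sh x f t <= sumR (fun e => if excluded_middle_informative (Q e)
                 then sh (upd x i0 (Y e)) f t else 0) m + G f t) ->
  rho <= payoff E lam n x i0 -> 0 < rho -> (countP Q m < K)%nat ->
  INR (length E) * c < rho -> False.
Proof.
  intros HY HG1 HG2 Hpt Hrho Hrho0 HK Hc.
  set (P := payoff E lam n x i0).
  assert (Hf : forall f, (f < length E)%nat ->
     INR K * RInt (sh x f) 0 (lam f) <=
     sumR (fun e => if excluded_middle_informative (Q e)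
                 then RInt (sh (upd x i0 (Y e)) f) 0 (lam f) else 0) m + c).
  { intros f Hfl. pose proof (lam_pos f Hfl) as Hl.
    set (F := fun e => if excluded_middle_informative (Q e) then sh (upd x i0 (Y e)) f else (fun _ : R => 0)).
    assert (HF : forall e, (e < m)%nat -> ex_RInt (F e) 0 (lam f)).
    { intros e He. unfold F. destruct (excluded_middle_informative (Q e)); [apply sh_ex; auto | apply ex_RInt_const]. }
    destruct (RInt_sumR F m 0 (lam f) HF) as [S1 S2].
    rewrite <- RInt_scalR by (apply sh_ex; auto).
    eapply Rle_trans.
    - apply RInt_le with (g := fun t => sumR (fun e => F e t) m + G f t).
      + lra.
      + apply ex_RInt_scalR, sh_ex; auto.
      + apply ex_RInt_plusR; auto.
      + intros t Ht. eapply Rle_trans; [apply Hpt; auto|]. right. f_equal.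
        apply sumR_ext. intros e He. unfold F. destruct (excluded_middle_informative (Q e)); auto.
    - rewrite RInt_plusR; auto. rewrite S2.
      assert (RInt (G f) 0 (lam f) <= c) by auto.
      assert (sumR (fun e => RInt (F e) 0 (lam f)) m =
              sumR (fun e => if excluded_middle_informative (Q e)
                 then RInt (sh (upd x i0 (Y e)) f) 0 (lam f) else 0) m).
      { apply sumR_ext. intros e He. unfold F. destruct (excluded_middle_informative (Q e)); auto.
        apply RInt_zero. }
      lra. }
  assert (Hsum : INR K * P <= INR (countP Q m) * P + INR (length E) * c).
  { unfold P. rewrite !payoff_RInt. rewrite <- sumR_scal.
    eapply Rle_trans; [apply sumR_le; exact Hf|].
    rewrite sumR_plus. rewrite sumR_swap.
    assert (sumR (fun _ => c) (length E) = INR (length E) * c).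
    { clear. induction (length E) as [|k IH]; simpl sumR; [simpl; ring|]. rewrite IH, S_INR; ring. }
    rewrite H.
    assert (sumR (fun b => sumR (fun a => if excluded_middle_informative (Q b)
             then RInt (sh (upd x i0 (Y b)) a) 0 (lam a) else 0) (length E)) m =
            sumR (fun b => if excluded_middle_informative (Q b)
             then payoff E lam n (upd x i0 (Y b)) i0 else 0) m).
    { apply sumR_ext. intros e He. destruct (excluded_middle_informative (Q e)).
      - rewrite payoff_RInt; auto.
      - apply sumR_zero. }
    rewrite H0. rewrite <- payoff_RInt.
    assert (sumR (fun b => if excluded_middle_informative (Q b)
             then payoff E lam n (upd x i0 (Y b)) i0 else 0) m <= INR (countP Q m) * payoff E lam n x i0).
    { apply sumR_cond_bound. intros e He Qe. destruct Hnash as [_ HN]. apply HN; auto. }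
    lra. }
  assert (HKD : INR (countP Q m) + 1 <= INR K).
  { rewrite <- S_INR. apply le_INR. lia. }
  assert (0 <= INR (length E)) by apply pos_INR.
  fold P in Hrho. nra.
Qed.

End Core.

Lemma Rinv_nonneg a : 0 <= a -> 0 <= / a.
Proof. intros H. destruct (Req_dec a 0) as [->|N]; [rewrite Rinv_0; lra|]. left; apply Rinv_0_lt_compat; lra. Qed.

Section Shares.
Variables (E : list (nat * nat)) (lam : nat -> R) (n : nat).

Lemma share_nonneg p i y : 0 <= share E lam n p i y.
Proof.
  unfold share; cbv zeta. destruct (excluded_middle_informative _); [|lra].
  apply Rinv_nonneg. apply Rmult_le_pos; apply pos_INR.
Qed.

Lemma share_one p i y : (i < n)%nat ->
  (forall j, (j < n)%nat -> j <> i -> dist E lam y (p i) < dist E lam y (p j) /\ p j <> p i) ->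
  share E lam n p i y = 1.
Proof.
  intros Hi H. unfold share; cbv zeta.
  rewrite (countP_unique _ n i Hi).
  2:{ intros k Hk. split.
      - intros [C F]. destruct (Nat.eq_dec k i); auto. exfalso.
        destruct (H k Hk n0) as [H1 _]. specialize (C i Hi). lra.
      - intros ->. split.
        + intros j Hj. destruct (Nat.eq_dec j i); [subst; lra|]. left; apply H; auto.
        + intros k Hk' E'. destruct (H k ltac:(lia) ltac:(lia)) as [_ H2]. auto. }
  rewrite (countP_unique _ n i Hi).
  2:{ intros k Hk. split.
      - intros Ek. destruct (Nat.eq_dec k i); auto. exfalso. apply (H k Hk n0); auto.
      - intros ->; auto. }
  destruct (excluded_middle_informative _) as [C|C].
  - simpl. field.
  - exfalso. apply C. intros j Hj. destruct (Nat.eq_dec j i); [subst; lra|]. left; apply H; auto.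
Qed.

Variables (x : nat -> Pt) (i0 : nat) (w : Pt).
Hypothesis Hi0 : (i0 < n)%nat.
Hypothesis Hxw : x i0 = w.

Lemma nat_i_K : countP (fun j => x j = x i0) n = countP (fun j => x j = w) n.
Proof. apply countP_ext. intros; rewrite Hxw; tauto. Qed.

Lemma share_le_K y : INR (countP (fun j => x j = w) n) * share E lam n x i0 y <= 1.
Proof.
  unfold share; cbv zeta. rewrite nat_i_K. destruct (excluded_middle_informative _) as [C|C]; [|lra].
  set (K := countP (fun j => x j = w) n).
  assert (HK : (1 <= K)%nat) by (apply countP_pos; exists i0; auto).
  set (N := countP _ n).
  assert (HN : (1 <= N)%nat).
  { apply countP_pos. destruct (first_occ x w n) as [j [Hj [Ej Fj]]]; [exists i0; auto|].
    exists j; split; auto. split.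
    - rewrite Ej, <- Hxw; auto.
    - intros k Hk. rewrite Ej. apply Fj; auto. }
  apply le_INR in HK. apply le_INR in HN. simpl in HK, HN.
  replace (INR K * / (INR N * INR K)) with (/ INR N) by (field; lra).
  rewrite <- Rinv_1. apply Rinv_le_contravar; lra.
Qed.

Lemma share_lower y : (forall j, (j < n)%nat -> dist E lam y w <= dist E lam y (x j)) ->
  / (INR n * INR (countP (fun j => x j = w) n)) <= share E lam n x i0 y.
Proof.
  intros C. unfold share; cbv zeta. rewrite nat_i_K. destruct (excluded_middle_informative _) as [C'|C'].
  2:{ exfalso; apply C'; rewrite Hxw; auto. }
  set (K := countP (fun j => x j = w) n).
  assert (HK : (1 <= K)%nat) by (apply countP_pos; exists i0; auto).
  set (N := countP _ n).
  assert (HN : (1 <= N)%nat).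
  { apply countP_pos. destruct (first_occ x w n) as [j [Hj [Ej Fj]]]; [exists i0; auto|].
    exists j; split; auto. split.
    - rewrite Ej, <- Hxw; auto.
    - intros k Hk. rewrite Ej. apply Fj; auto. }
  assert (HNn : (N <= n)%nat) by apply countP_le.
  apply le_INR in HK. apply le_INR in HN. apply le_INR in HNn. simpl in HK, HN.
  apply Rinv_le_contravar. nra. apply Rmult_le_compat_r; lra.
Qed.

End Shares.

Definition ind (a b t : R) : R := if Rlt_dec a t then if Rlt_dec t b then 1 else 0 else 0.

Lemma ind_nonneg a b t : 0 <= ind a b t.
Proof. unfold ind. destruct (Rlt_dec a t); [destruct (Rlt_dec t b)|]; lra. Qed.

Lemma ind_one a b t : a < t < b -> ind a b t = 1.
Proof. intros. unfold ind. destruct (Rlt_dec a t); [destruct (Rlt_dec t b)|]; lra. Qed.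

Lemma RInt_ChaslesR f a b c : ex_RInt f a b -> ex_RInt f b c -> RInt f a b + RInt f b c = RInt f a c.
Proof. intros; exact (RInt_Chasles f a b c H H0). Qed.

Lemma RInt_const_on g a b c : a <= b -> (forall t, a < t < b -> g t = c) -> RInt g a b = c * (b - a).
Proof.
  intros Hab H. rewrite (RInt_ext g (fun _ => c)).
  - rewrite RInt_const. unfold scal; simpl; unfold mult; simpl. ring.
  - intros t Ht. rewrite Rmin_left in Ht by lra. rewrite Rmax_right in Ht by lra. auto.
Qed.

Lemma ind_int a b L : 0 <= a <= b -> b <= L -> ex_RInt (ind a b) 0 L /\ RInt (ind a b) 0 L = b - a.
Proof.
  intros Hab HbL.
  assert (I1 : forall t, 0 < t < a -> ind a b t = 0) by (intros; unfold ind; destruct (Rlt_dec a t); lra).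
  assert (I2 : forall t, a < t < b -> ind a b t = 1) by (intros; apply ind_one; auto).
  assert (I3 : forall t, b < t < L -> ind a b t = 0)
    by (intros; unfold ind; destruct (Rlt_dec a t); [destruct (Rlt_dec t b)|]; lra).
  assert (E1 : ex_RInt (ind a b) 0 a) by (apply ex_RInt_const_on with 0; lra || auto).
  assert (E2 : ex_RInt (ind a b) a b) by (apply ex_RInt_const_on with 1; lra || auto).
  assert (E3 : ex_RInt (ind a b) b L) by (apply ex_RInt_const_on with 0; lra || auto).
  split.
  - apply ex_RInt_Chasles with a; auto. apply ex_RInt_Chasles with b; auto.
  - rewrite <- (RInt_ChaslesR _ 0 a L); auto; [|apply ex_RInt_Chasles with b; auto].
    rewrite <- (RInt_ChaslesR _ a b L); auto.
    rewrite (RInt_const_on _ 0 a 0), (RInt_const_on _ a b 1), (RInt_const_on _ b L 0); auto; try lra.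
Qed.

Lemma RInt_lower g L a b c : 0 <= a <= b -> b <= L -> ex_RInt g 0 L ->
  (forall t, 0 < t < L -> 0 <= g t) -> (forall t, a < t < b -> c <= g t) -> 0 <= c ->
  c * (b - a) <= RInt g 0 L.
Proof.
  intros Hab HbL Hg H0 Hc Hc0.
  destruct (ind_int a b L Hab HbL) as [Ei Ri].
  rewrite <- Ri, <- RInt_scalR by auto.
  apply RInt_le; auto; [lra| apply ex_RInt_scalR; auto|].
  intros t Ht. unfold ind. destruct (Rlt_dec a t); [destruct (Rlt_dec t b)|].
  - rewrite Rmult_1_r. apply Hc; lra.
  - rewrite Rmult_0_r; auto.
  - rewrite Rmult_0_r; auto.
Qed.

Section Geo.
Variables (nV : nat) (E : list (nat * nat)) (lam : nat -> R).
Hypothesis Hnet : network nV E lam.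

Definition viaD f t g s :=
  Rmin (Rmin (t + dV E lam (esrc E f) (esrc E g) + s) (t + dV E lam (esrc E f) (edst E g) + (lam g - s)))
       (Rmin ((lam f - t) + dV E lam (edst E f) (esrc E g) + s) ((lam f - t) + dV E lam (edst E f) (edst E g) + (lam g - s))).

Lemma dist_PEPE f t g s : dist E lam (PE f t) (PE g s) =
  if Nat.eq_dec f g then Rmin (Rabs (t - s)) (viaD f t g s) else viaD f t g s.
Proof. reflexivity. Qed.

Lemma dist_PEPV f t v : dist E lam (PE f t) (PV v) =
  Rmin (t + dV E lam (esrc E f) v) (lam f - t + dV E lam (edst E f) v).
Proof. reflexivity. Qed.

Lemma dist_le_via f t g s : dist E lam (PE f t) (PE g s) <= viaD f t g s.
Proof. rewrite dist_PEPE. destruct (Nat.eq_dec f g); [apply Rmin_r|lra]. Qed.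

Lemma dist_le_abs f t s : dist E lam (PE f t) (PE f s) <= Rabs (t - s).
Proof. rewrite dist_PEPE. destruct (Nat.eq_dec f f); [apply Rmin_l|congruence]. Qed.

Lemma via_shift f t g s e : 0 < e ->
  Rmin (viaD f t g (s - e)) (viaD f t g (s + e)) <= viaD f t g s - e.
Proof. intros He. unfold viaD, Rmin. repeat destruct Rle_dec; lra. Qed.

Lemma via_le1 f t g s : viaD f t g s <= t + dV E lam (esrc E f) (esrc E g) + s.
Proof. unfold viaD, Rmin. repeat destruct Rle_dec; lra. Qed.
Lemma via_le2 f t g s : viaD f t g s <= t + dV E lam (esrc E f) (edst E g) + (lam g - s).
Proof. unfold viaD, Rmin. repeat destruct Rle_dec; lra. Qed.
Lemma via_le3 f t g s : viaD f t g s <= (lam f - t) + dV E lam (edst E f) (esrc E g) + s.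
Proof. unfold viaD, Rmin. repeat destruct Rle_dec; lra. Qed.
Lemma via_le4 f t g s : viaD f t g s <= (lam f - t) + dV E lam (edst E f) (edst E g) + (lam g - s).
Proof. unfold viaD, Rmin. repeat destruct Rle_dec; lra. Qed.

Lemma via_gt f t g s : (f < length E)%nat -> (g < length E)%nat -> 0 < s < lam g ->
  Rmin t (lam f - t) < viaD f t g s.
Proof.
  intros Hf Hg Hs.
  destruct (edge_ok nV E lam Hnet f Hf) as [A1 [A2 _]].
  destruct (edge_ok nV E lam Hnet g Hg) as [B1 [B2 _]].
  pose proof (dV_nonneg nV E lam Hnet (esrc E f) (esrc E g) A1 B1).
  pose proof (dV_nonneg nV E lam Hnet (esrc E f) (edst E g) A1 B2).
  pose proof (dV_nonneg nV E lam Hnet (edst E f) (esrc E g) A2 B1).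
  pose proof (dV_nonneg nV E lam Hnet (edst E f) (edst E g) A2 B2).
  unfold viaD, Rmin. repeat destruct Rle_dec; lra.
Qed.

Variable v : nat.
Hypothesis Hv : (v < nV)%nat.
Variable eps : R.
Hypothesis Heps : 0 < eps.

Definition Yv e := PE e (if Nat.eq_dec (esrc E e) v then eps else lam e - eps).

Lemma geo_vertex f t : (f < length E)%nat -> eps <= t <= lam f - eps ->
  exists e, (e < length E)%nat /\ (esrc E e = v \/ edst E e = v) /\
    dist E lam (PE f t) (Yv e) < dist E lam (PE f t) (PV v).
Proof.
  intros Hf Ht. rewrite dist_PEPV.
  destruct (edge_ok nV E lam Hnet f Hf) as [F1 [F2 [F3 F4]]].
  destruct (Rle_dec (t + dV E lam (esrc E f) v) (lam f - t + dV E lam (edst E f) v)) as [Hm|Hm].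
  - rewrite Rmin_left by auto.
    destruct (dV_approx nV E lam Hnet (esrc E f) v eps F1 Hv Heps) as [L [W HL]].
    destruct (walk_last E lam _ _ _ W) as [[Eu EL]|[e [u' [L' [He [Hd [W' EL]]]]]]].
    + exists f; repeat split; auto. unfold Yv. destruct (Nat.eq_dec (esrc E f) v); [|congruence].
      eapply Rle_lt_trans; [apply dist_le_abs|].
      pose proof (dV_nonneg nV E lam Hnet (esrc E f) v F1 Hv).
      rewrite Rabs_right by lra. lra.
    + destruct (edge_ok nV E lam Hnet e He) as [G1 [G2 [G3 G4]]].
      exists e; split; auto.
      destruct Hd as [[D1 D2]|[D1 D2]].
      * split; auto. unfold Yv. destruct (Nat.eq_dec (esrc E e) v); [congruence|].
        eapply Rle_lt_trans; [apply dist_le_via|]. eapply Rle_lt_trans; [apply via_le1|].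
        assert (dV E lam (esrc E f) (esrc E e) <= L') by (apply (dV_le nV E lam Hnet); auto; rewrite D1; auto).
        lra.
      * split; auto. unfold Yv. destruct (Nat.eq_dec (esrc E e) v); [|congruence].
        eapply Rle_lt_trans; [apply dist_le_via|]. eapply Rle_lt_trans; [apply via_le2|].
        assert (dV E lam (esrc E f) (edst E e) <= L') by (apply (dV_le nV E lam Hnet); auto; rewrite D1; auto).
        lra.
  - rewrite Rmin_right by lra.
    destruct (dV_approx nV E lam Hnet (edst E f) v eps F2 Hv Heps) as [L [W HL]].
    destruct (walk_last E lam _ _ _ W) as [[Eu EL]|[e [u' [L' [He [Hd [W' EL]]]]]]].
    + exists f; repeat split; auto. unfold Yv. destruct (Nat.eq_dec (esrc E f) v); [congruence|].
      eapply Rle_lt_trans; [apply dist_le_abs|].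
      pose proof (dV_nonneg nV E lam Hnet (edst E f) v F2 Hv).
      rewrite Rabs_left1 by lra. lra.
    + destruct (edge_ok nV E lam Hnet e He) as [G1 [G2 [G3 G4]]].
      exists e; split; auto.
      destruct Hd as [[D1 D2]|[D1 D2]].
      * split; auto. unfold Yv. destruct (Nat.eq_dec (esrc E e) v); [congruence|].
        eapply Rle_lt_trans; [apply dist_le_via|]. eapply Rle_lt_trans; [apply via_le3|].
        assert (dV E lam (edst E f) (esrc E e) <= L') by (apply (dV_le nV E lam Hnet); auto; rewrite D1; auto).
        lra.
      * split; auto. unfold Yv. destruct (Nat.eq_dec (esrc E e) v); [|congruence].
        eapply Rle_lt_trans; [apply dist_le_via|]. eapply Rle_lt_trans; [apply via_le4|].
        assert (dV E lam (edst E f) (edst E e) <= L') by (apply (dV_le nV E lam Hnet); auto; rewrite D1; auto).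
        lra.
Qed.

End Geo.

Section Geo2.
Variables (nV : nat) (E : list (nat * nat)) (lam : nat -> R).
Hypothesis Hnet : network nV E lam.

Lemma geo_interior ew sw f t eps : 0 < eps -> (f = ew -> eps <= Rabs (t - sw)) ->
  dist E lam (PE f t) (PE ew (sw - eps)) < dist E lam (PE f t) (PE ew sw) \/
  dist E lam (PE f t) (PE ew (sw + eps)) < dist E lam (PE f t) (PE ew sw).
Proof.
  intros He Hn.
  pose proof (via_shift E lam f t ew sw eps He).
  pose proof (dist_le_via E lam f t ew (sw - eps)).
  pose proof (dist_le_via E lam f t ew (sw + eps)).
  assert (Hv : Rmin (viaD E lam f t ew (sw - eps)) (viaD E lam f t ew (sw + eps)) <=
               viaD E lam f t ew (sw - eps) /\
               Rmin (viaD E lam f t ew (sw - eps)) (viaD E lam f t ew (sw + eps)) <=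
               viaD E lam f t ew (sw + eps)) by (split; [apply Rmin_l|apply Rmin_r]).
  rewrite (dist_PEPE E lam f t ew sw). destruct (Nat.eq_dec f ew) as [->|N].
  - specialize (Hn eq_refl).
    pose proof (dist_le_abs E lam ew t (sw - eps)).
    pose proof (dist_le_abs E lam ew t (sw + eps)).
    destruct (Rle_dec (Rabs (t - sw)) (viaD E lam ew t ew sw)).
    + rewrite (Rmin_left (Rabs (t - sw)) (viaD E lam ew t ew sw)) by auto.
      unfold Rabs in *. repeat destruct Rcase_abs; try lra.
    + rewrite (Rmin_right (Rabs (t - sw)) (viaD E lam ew t ew sw)) by lra.
      unfold Rmin in H, Hv. destruct (Rle_dec (viaD E lam ew t ew (sw - eps)) (viaD E lam ew t ew (sw + eps))); lra.
  - unfold Rmin in H, Hv. destruct (Rle_dec (viaD E lam f t ew (sw - eps)) (viaD E lam f t ew (sw + eps))); lra.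
Qed.

Lemma dist_PE_ge f t g s : (f < length E)%nat -> (g < length E)%nat -> 0 < s < lam g ->
  (f = g /\ Rmin (Rabs (t - s)) (Rmin t (lam f - t)) <= dist E lam (PE f t) (PE g s)) \/
  (f <> g /\ Rmin t (lam f - t) < dist E lam (PE f t) (PE g s)).
Proof.
  intros Hf Hg Hs. pose proof (via_gt nV E lam Hnet f t g s Hf Hg Hs).
  rewrite dist_PEPE. destruct (Nat.eq_dec f g).
  - left. split; auto. unfold Rmin in *. repeat destruct Rle_dec; lra.
  - right; split; auto.
Qed.

Lemma region_A f0 v p mu : (f0 < length E)%nat -> esrc E f0 = v -> valid_pt nV E lam p ->
  (forall e, (e < length E)%nat -> mu <= lam e) -> 0 < mu ->
  exists d, 0 < d /\ forall t, 0 < t < d -> dist E lam (PE f0 t) (PV v) <= dist E lam (PE f0 t) p.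
Proof.
  intros Hf Hsrc Hp Hmu Hmu0.
  destruct (edge_ok nV E lam Hnet f0 Hf) as [F1 [F2 [F3 F4]]].
  assert (Hw : forall t, dist E lam (PE f0 t) (PV v) <= t).
  { intros t. rewrite dist_PEPV. eapply Rle_trans; [apply Rmin_l|].
    rewrite Hsrc. pose proof (dV_refl nV E lam Hnet v ltac:(rewrite <- Hsrc; auto)). lra. }
  destruct p as [u|g s].
  - destruct (Nat.eq_dec u v) as [->|N]. { exists 1; split; [lra|]; intros; lra. }
    exists (Rmin mu (lam f0 / 2)). split; [apply Rmin_glb_lt; lra|]. intros t Ht.
    assert (Rmin mu (lam f0 / 2) <= mu) by apply Rmin_l. assert (Rmin mu (lam f0 / 2) <= lam f0 / 2) by apply Rmin_r.
    eapply Rle_trans; [apply Hw|]. rewrite dist_PEPV. simpl in Hp.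
    pose proof (dV_pos nV E lam Hnet mu (esrc E f0) u Hmu F1 Hp ltac:(rewrite Hsrc; auto)).
    pose proof (dV_nonneg nV E lam Hnet (edst E f0) u F2 Hp).
    apply Rmin_glb; lra.
  - simpl in Hp. destruct Hp as [Hg Hs].
    exists (Rmin (lam f0 / 2) (s / 2)). split; [apply Rmin_glb_lt; lra|]. intros t Ht.
    assert (Rmin (lam f0 / 2) (s / 2) <= lam f0 / 2) by apply Rmin_l. assert (Rmin (lam f0 / 2) (s / 2) <= s / 2) by apply Rmin_r.
    eapply Rle_trans; [apply Hw|].
    destruct (dist_PE_ge f0 t g s Hf Hg Hs) as [[<- HH]|[_ HH]]; unfold Rmin, Rabs in *;
      repeat destruct Rle_dec; repeat destruct Rcase_abs; lra.
Qed.

Lemma region_B f0 v p mu : (f0 < length E)%nat -> edst E f0 = v -> valid_pt nV E lam p ->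
  (forall e, (e < length E)%nat -> mu <= lam e) -> 0 < mu ->
  exists d, 0 < d /\ forall u, 0 < u < d ->
    dist E lam (PE f0 (lam f0 - u)) (PV v) <= dist E lam (PE f0 (lam f0 - u)) p.
Proof.
  intros Hf Hdst Hp Hmu Hmu0.
  destruct (edge_ok nV E lam Hnet f0 Hf) as [F1 [F2 [F3 F4]]].
  assert (Hw : forall u, dist E lam (PE f0 (lam f0 - u)) (PV v) <= u).
  { intros u. rewrite dist_PEPV. eapply Rle_trans; [apply Rmin_r|].
    rewrite Hdst. pose proof (dV_refl nV E lam Hnet v ltac:(rewrite <- Hdst; auto)). lra. }
  destruct p as [u'|g s].
  - destruct (Nat.eq_dec u' v) as [->|N]. { exists 1; split; [lra|]; intros; lra. }
    exists (Rmin mu (lam f0 / 2)). split; [apply Rmin_glb_lt; lra|]. intros u Hu.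
    assert (Rmin mu (lam f0 / 2) <= mu) by apply Rmin_l. assert (Rmin mu (lam f0 / 2) <= lam f0 / 2) by apply Rmin_r.
    eapply Rle_trans; [apply Hw|]. rewrite dist_PEPV. simpl in Hp.
    pose proof (dV_pos nV E lam Hnet mu (edst E f0) u' Hmu F2 Hp ltac:(rewrite Hdst; auto)).
    pose proof (dV_nonneg nV E lam Hnet (esrc E f0) u' F1 Hp).
    apply Rmin_glb; lra.
  - simpl in Hp. destruct Hp as [Hg Hs].
    exists (Rmin (lam f0 / 2) ((lam g - s) / 2)).
    split; [apply Rmin_glb_lt; lra|]. intros u Hu.
    assert (Rmin (lam f0 / 2) ((lam g - s) / 2) <= lam f0 / 2) by apply Rmin_l.
    assert (Rmin (lam f0 / 2) ((lam g - s) / 2) <= (lam g - s) / 2) by apply Rmin_r.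
    eapply Rle_trans; [apply Hw|].
    destruct (dist_PE_ge f0 (lam f0 - u) g s Hf Hg Hs) as [[<- HH]|[_ HH]];
      unfold Rmin, Rabs in *; repeat destruct Rle_dec; repeat destruct Rcase_abs; lra.
Qed.
End Geo2.

Section Geo3.
Variables (nV : nat) (E : list (nat * nat)) (lam : nat -> R).
Hypothesis Hnet : network nV E lam.

Lemma region_I ew sw p : (ew < length E)%nat -> 0 < sw < lam ew -> valid_pt nV E lam p ->
  exists d, 0 < d /\ forall t, Rabs (t - sw) < d ->
    dist E lam (PE ew t) (PE ew sw) <= dist E lam (PE ew t) p.
Proof.
  intros He Hs Hp.
  destruct (edge_ok nV E lam Hnet ew He) as [F1 [F2 [F3 F4]]].
  set (d0 := Rmin (sw / 2) ((lam ew - sw) / 2)).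
  assert (d0 <= sw / 2) by apply Rmin_l. assert (d0 <= (lam ew - sw) / 2) by apply Rmin_r.
  assert (0 < d0) by (apply Rmin_glb_lt; lra).
  assert (Hw : forall t, dist E lam (PE ew t) (PE ew sw) <= Rabs (t - sw)) by (intros; apply dist_le_abs).
  assert (Hm : forall t, Rabs (t - sw) < d0 -> Rabs (t - sw) < Rmin t (lam ew - t)).
  { intros t Ht. unfold Rmin, Rabs in *; repeat destruct Rle_dec; repeat destruct Rcase_abs; lra. }
  destruct p as [u|g s].
  - exists d0; split; auto. intros t Ht. eapply Rle_trans; [apply Hw|].
    rewrite dist_PEPV. simpl in Hp.
    pose proof (dV_nonneg nV E lam Hnet (esrc E ew) u F1 Hp).
    pose proof (dV_nonneg nV E lam Hnet (edst E ew) u F2 Hp).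
    specialize (Hm t Ht). unfold Rmin in *; repeat destruct Rle_dec; lra.
  - simpl in Hp. destruct Hp as [Hg Hs'].
    destruct (Nat.eq_dec g ew) as [->|N].
    + destruct (Req_dec s sw) as [->|Ns]. { exists 1; split; [lra|]; intros; lra. }
      exists (Rmin d0 (Rabs (s - sw) / 2)).
      assert (0 < Rabs (s - sw)) by (apply Rabs_pos_lt; lra).
      assert (Rmin d0 (Rabs (s - sw) / 2) <= d0) by apply Rmin_l.
      assert (Hr2 : Rmin d0 (Rabs (s - sw) / 2) <= Rabs (s - sw) / 2) by apply Rmin_r.
      split; [apply Rmin_glb_lt; lra|]. intros t Ht. eapply Rle_trans; [apply Hw|].
      specialize (Hm t ltac:(lra)).
      destruct (dist_PE_ge nV E lam Hnet ew t ew s He He Hs') as [[_ HH]|[HH _]]; [|congruence].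
      revert HH Hm Hr2 Ht. generalize (Rmin t (lam ew - t)). generalize (Rmin d0 (Rabs (s - sw) / 2)). intros dd r HH Hm Hr2 Ht.
      unfold Rmin, Rabs in *; repeat destruct Rle_dec; repeat destruct Rcase_abs; lra.
    + exists d0; split; auto. intros t Ht. eapply Rle_trans; [apply Hw|].
      specialize (Hm t Ht).
      destruct (dist_PE_ge nV E lam Hnet ew t g s He Hg Hs') as [[HH _]|[_ HH]]; [congruence|]. lra.
Qed.

End Geo3.

Lemma walk_first E lam u v L : WalkLen E lam u v L -> u <> v ->
  exists e, (e < length E)%nat /\ (esrc E e = u \/ edst E e = u).
Proof. destruct 1; intros Hne; [congruence| exists e; auto | exists e; auto]. Qed.

Lemma incident_exists nV E lam v : network nV E lam -> (v < nV)%nat ->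
  exists f0, (f0 < length E)%nat /\ (esrc E f0 = v \/ edst E f0 = v).
Proof.
  intros Hnet Hv. pose proof Hnet as [Hl [_ [_ [Hc _]]]].
  destruct (edge_ok nV E lam Hnet 0 ltac:(lia)) as [A1 [A2 [A3 _]]].
  set (u := if Nat.eq_dec (esrc E 0) v then edst E 0 else esrc E 0).
  assert (Hu : (u < nV)%nat /\ u <> v).
  { unfold u; destruct (Nat.eq_dec (esrc E 0) v); split; auto; congruence. }
  destruct Hu as [Hu Hne].
  destruct (Hc v u Hv Hu) as [L W].
  destruct (walk_first _ _ _ _ _ W) as [e [He Hi]]; auto. exists e; auto.
Qed.

Section Main.
Variables (nV : nat) (E : list (nat * nat)) (lam : nat -> R) (n : nat) (x : nat -> Pt) (i0 : nat) (w : Pt).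
Hypothesis Hnet : network nV E lam.
Hypothesis Hnash : nash nV E lam n x.
Hypothesis Hi0 : (i0 < n)%nat.
Hypothesis Hxw : x i0 = w.

Definition closestw z := forall j, (j < n)%nat -> dist E lam z w <= dist E lam z (x j).

Lemma share_zero z : ~ closestw z -> share E lam n x i0 z = 0.
Proof.
  intros C. unfold share; cbv zeta. destruct (excluded_middle_informative _) as [C'|C']; auto.
  exfalso; apply C. intros j Hj. rewrite <- Hxw. apply C'; auto.
Qed.

Lemma upd_same y : upd x i0 y i0 = y.
Proof. unfold upd. destruct (Nat.eq_dec i0 i0); congruence. Qed.
Lemma upd_other y j : j <> i0 -> upd x i0 y j = x j.
Proof. intros. unfold upd. destruct (Nat.eq_dec j i0); congruence. Qed.

Lemma pointwise_gen z m (Q : nat -> Prop) (Y : nat -> Pt) Gv :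
  0 <= Gv ->
  (1 <= Gv \/ (closestw z -> exists e, (e < m)%nat /\ Q e /\ dist E lam z (Y e) < dist E lam z w)) ->
  (forall e, (e < m)%nat -> Q e -> forall j, (j < n)%nat -> x j <> Y e) ->
  INR (countP (fun j => x j = w) n) * share E lam n x i0 z <=
  sumR (fun e => if excluded_middle_informative (Q e) then share E lam n (upd x i0 (Y e)) i0 z else 0) m + Gv.
Proof.
  intros HG0 HG Hocc.
  pose proof (share_le_K E lam n x i0 w Hi0 Hxw z) as Hle.
  assert (HS : 0 <= sumR (fun e => if excluded_middle_informative (Q e) then share E lam n (upd x i0 (Y e)) i0 z else 0) m).
  { apply sumR_nonneg. intros e He. destruct (excluded_middle_informative (Q e)); [apply share_nonneg|lra]. }
  destruct HG as [HG|HG]; [lra|].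
  destruct (classic (closestw z)) as [C|C].
  2:{ rewrite share_zero by auto. rewrite Rmult_0_r. lra. }
  destruct (HG C) as [e [He [Qe Hd]]].
  assert (H1 : share E lam n (upd x i0 (Y e)) i0 z = 1).
  { apply share_one; auto. intros j Hj Hji. rewrite upd_same, upd_other by auto. split.
    - specialize (C j Hj). lra.
    - intro Ej. apply (Hocc e He Qe j Hj); auto. }
  set (F := fun e => if excluded_middle_informative (Q e) then share E lam n (upd x i0 (Y e)) i0 z else 0) in *.
  assert (HF : F e = 1) by (unfold F; destruct (excluded_middle_informative (Q e)); [auto|tauto]).
  assert (F e <= sumR F m).
  { apply sumR_ge_term; auto. intros k Hk. unfold F. destruct (excluded_middle_informative (Q k)); [apply share_nonneg|lra]. }
  lra.
Qed.

End Main.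

Section Cases.
Variables (nV : nat) (E : list (nat * nat)) (lam : nat -> R) (n : nat) (x : nat -> Pt) (i0 : nat).
Hypothesis Hnet : network nV E lam.
Hypothesis Hnash : nash nV E lam n x.
Hypothesis Hi0 : (i0 < n)%nat.

Lemma rho_from_region w f0 a b : (f0 < length E)%nat -> 0 <= a < b -> b <= lam f0 -> x i0 = w ->
  (forall t, a < t < b -> closestw E lam n x w (PE f0 t)) ->
  / (INR n * INR (countP (fun j => x j = w) n)) * (b - a) <= payoff E lam n x i0.
Proof.
  intros Hf Hab Hb Hxw Hc.
  rewrite (payoff_RInt nV E lam n i0 Hnet Hi0 x).
  eapply Rle_trans; [|apply sumR_ge_term with (k := f0); auto].
  - apply RInt_lower; try lra.
    + apply (sh_ex nV E lam n i0 Hnet Hi0); auto.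
    + intros; apply share_nonneg.
    + intros t Ht. unfold sh. rewrite pt_of_int by lra. apply share_lower; auto. apply Hc; lra.
    + apply Rinv_nonneg. apply Rmult_le_pos; apply pos_INR.
  - intros k Hk. apply RInt_ge_0.
    + left; apply (lam_pos nV E lam Hnet k Hk).
    + apply (sh_ex nV E lam n i0 Hnet Hi0); auto.
    + intros; apply share_nonneg.
Qed.

Lemma valid_players : forall j, (j < n)%nat -> valid_pt nV E lam (x j).
Proof. destruct Hnash; auto. Qed.

Lemma vertex_case v : x i0 = PV v -> (v < nV)%nat ->
  (vdegree E v < countP (fun j => x j = PV v) n)%nat -> False.
Proof.
  intros Hxw Hv Hdeg.
  set (K := countP (fun j => x j = PV v) n) in *.
  destruct (lmin_ex nV E lam Hnet) as [mu [Hmu Hmul]].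
  destruct (incident_exists nV E lam v Hnet Hv) as [f0 [Hf0 Hinc]].
  pose proof (lam_pos nV E lam Hnet f0 Hf0) as Hl0.
  assert (Hreg : exists a b, 0 <= a < b /\ b <= lam f0 /\
            forall t, a < t < b -> closestw E lam n x (PV v) (PE f0 t)).
  { destruct Hinc as [Hs|Hd].
    - destruct (fin_delta (fun j d => forall t, 0 < t < d ->
          dist E lam (PE f0 t) (PV v) <= dist E lam (PE f0 t) (x j)) n) as [d [Hd0 HH]].
      + intros j Hj. apply region_A with nV mu; auto. apply valid_players; auto.
      + intros j d d' Hd' H t Ht. apply H; lra.
      + exists 0, (Rmin d (lam f0)). assert (Rmin d (lam f0) <= d) by apply Rmin_l.
        assert (Rmin d (lam f0) <= lam f0) by apply Rmin_r.
        assert (0 < Rmin d (lam f0)) by (apply Rmin_glb_lt; lra).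
        repeat split; try lra. intros t Ht j Hj. apply HH; auto; lra.
    - destruct (fin_delta (fun j d => forall u, 0 < u < d ->
          dist E lam (PE f0 (lam f0 - u)) (PV v) <= dist E lam (PE f0 (lam f0 - u)) (x j)) n) as [d [Hd0 HH]].
      + intros j Hj. apply region_B with nV mu; auto. apply valid_players; auto.
      + intros j d d' Hd' H u Hu. apply H; lra.
      + exists (lam f0 - Rmin d (lam f0)), (lam f0). assert (Rmin d (lam f0) <= d) by apply Rmin_l.
        assert (Rmin d (lam f0) <= lam f0) by apply Rmin_r.
        assert (0 < Rmin d (lam f0)) by (apply Rmin_glb_lt; lra).
        repeat split; try lra. intros t Ht j Hj. replace t with (lam f0 - (lam f0 - t)) by ring.
        apply HH; auto; lra. }
  destruct Hreg as [a [b [Hab [Hb Hcl]]]].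
  set (rho := / (INR n * INR K) * (b - a)).
  assert (Hrho : rho <= payoff E lam n x i0) by (apply rho_from_region with f0; auto).
  assert (HK1 : (1 <= K)%nat) by lia.
  assert (Hn1 : (1 <= n)%nat) by lia.
  assert (Hrho0 : 0 < rho).
  { unfold rho. apply Rmult_lt_0_compat; [|lra]. apply Rinv_0_lt_compat.
    apply le_INR in HK1; apply le_INR in Hn1; simpl in *. nra. }
  destruct (fin_delta (fun j d => forall eps, 0 < eps < d -> forall e,
      x j <> PE e eps /\ x j <> PE e (lam e - eps)) n) as [dO [HdO HO]].
  { intros j Hj. pose proof (valid_players j Hj) as Vj. destruct (x j) as [u|g s].
    - exists 1; split; [lra|]. intros; split; discriminate.
    - simpl in Vj. exists (Rmin s (lam g - s)). assert (Rmin s (lam g - s) <= s) by apply Rmin_l.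
      assert (Rmin s (lam g - s) <= lam g - s) by apply Rmin_r.
      split; [apply Rmin_glb_lt; lra|]. intros eps He e. split; intros EE; injection EE; intros; subst; lra. }
  { intros j d d' Hd' H eps He. apply H; lra. }
  set (L := INR (length E)). assert (HL : 0 <= L) by apply pos_INR.
  set (eps := Rmin (Rmin (mu / 2) (dO / 2)) (rho / (4 * L + 4))).
  assert (He1 : eps <= mu / 2) by (unfold eps; eapply Rle_trans; [apply Rmin_l|apply Rmin_l]).
  assert (He2 : eps <= dO / 2) by (unfold eps; eapply Rle_trans; [apply Rmin_l|apply Rmin_r]).
  assert (He3 : eps <= rho / (4 * L + 4)) by (unfold eps; apply Rmin_r).
  assert (He0 : 0 < eps).
  { unfold eps. apply Rmin_glb_lt; [apply Rmin_glb_lt; lra|]. apply Rdiv_lt_0_compat; lra. }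
  assert (Hlam : forall e, (e < length E)%nat -> 2 * eps <= lam e) by (intros e He; pose proof (Hmul e He); lra).
  apply (core nV E lam n x i0 Hnet Hnash Hi0 K (length E) (fun e => esrc E e = v \/ edst E e = v)
           (Yv E lam v eps) (2 * eps) rho (fun f t => ind 0 eps t + ind (lam f - eps) (lam f) t)).
  - intros e He Qe. pose proof (Hlam e He). unfold Yv; simpl. split; auto.
    destruct (Nat.eq_dec (esrc E e) v); lra.
  - intros f Hf. pose proof (Hlam f Hf). apply ex_RInt_plusR; apply ind_int; lra.
  - intros f Hf. pose proof (Hlam f Hf).
    destruct (ind_int 0 eps (lam f)) as [I1 R1]; try lra.
    destruct (ind_int (lam f - eps) (lam f) (lam f)) as [I2 R2]; try lra.
    rewrite RInt_plusR; auto. lra.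
  - intros f t Hf Ht. unfold sh. rewrite (pt_of_int E lam f t Ht).
    apply pointwise_gen; auto.
    + pose proof (ind_nonneg 0 eps t). pose proof (ind_nonneg (lam f - eps) (lam f) t). lra.
    + destruct (Rlt_dec t eps).
      { left. rewrite ind_one by lra. pose proof (ind_nonneg (lam f - eps) (lam f) t). lra. }
      destruct (Rlt_dec (lam f - eps) t).
      { left. rewrite (ind_one (lam f - eps)) by lra. pose proof (ind_nonneg 0 eps t). lra. }
      right. intros _. destruct (geo_vertex nV E lam Hnet v Hv eps He0 f t Hf) as [e [He [Qe Hd]]]; [lra|].
      exists e; auto.
    + intros e He Qe j Hj. unfold Yv. destruct (HO j Hj eps ltac:(lra) e).
      destruct (Nat.eq_dec (esrc E e) v); auto.
  - exact Hrho.
  - exact Hrho0.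
  - exact Hdeg.
  - assert (L * (2 * eps) <= L * (2 * (rho / (4 * L + 4)))) by (apply Rmult_le_compat_l; lra).
    assert (L * (2 * (rho / (4 * L + 4))) < rho).
    { replace (L * (2 * (rho / (4 * L + 4)))) with (rho * (2 * L / (4 * L + 4))) by (field; lra).
      assert (2 * L / (4 * L + 4) < 1). { apply (Rmult_lt_reg_r (4 * L + 4)); [lra|].
        unfold Rdiv. rewrite Rmult_assoc, Rinv_l by lra. lra. }
      nra. }
    fold L. lra.
Qed.

End Cases.

Section Cases2.
Variables (nV : nat) (E : list (nat * nat)) (lam : nat -> R) (n : nat) (x : nat -> Pt) (i0 : nat).
Hypothesis Hnet : network nV E lam.
Hypothesis Hnash : nash nV E lam n x.
Hypothesis Hi0 : (i0 < n)%nat.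

Lemma interior_case ew sw : x i0 = PE ew sw -> (ew < length E)%nat -> 0 < sw < lam ew ->
  (2 < countP (fun j => x j = PE ew sw) n)%nat -> False.
Proof.
  intros Hxw Hew Hsw Hdeg.
  set (K := countP (fun j => x j = PE ew sw) n) in *.
  pose proof (lam_pos nV E lam Hnet ew Hew) as Hl0.
  assert (Hreg : exists a b, 0 <= a < b /\ b <= lam ew /\
            forall t, a < t < b -> closestw E lam n x (PE ew sw) (PE ew t)).
  { destruct (fin_delta (fun j d => forall t, Rabs (t - sw) < d ->
          dist E lam (PE ew t) (PE ew sw) <= dist E lam (PE ew t) (x j)) n) as [d [Hd0 HH]].
    + intros j Hj. apply region_I with nV; auto. apply (valid_players nV E lam n x Hnash); auto.
    + intros j d d' Hd' H t Ht. apply H; lra.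
    + set (d' := Rmin d (Rmin sw (lam ew - sw))).
      assert (d' <= d) by apply Rmin_l.
      assert (d' <= Rmin sw (lam ew - sw)) by apply Rmin_r.
      assert (Rmin sw (lam ew - sw) <= sw) by apply Rmin_l.
      assert (Rmin sw (lam ew - sw) <= lam ew - sw) by apply Rmin_r.
      assert (0 < d') by (apply Rmin_glb_lt; [lra|apply Rmin_glb_lt; lra]).
      exists (sw - d'), (sw + d').
      repeat split; try lra. intros t Ht j Hj. apply HH; auto.
      unfold Rabs; destruct Rcase_abs; lra. }
  destruct Hreg as [a [b [Hab [Hb Hcl]]]].
  set (rho := / (INR n * INR K) * (b - a)).
  assert (Hrho : rho <= payoff E lam n x i0) by (apply (rho_from_region nV E lam n x i0 Hnet Hi0) with ew; auto).
  assert (HK1 : (1 <= K)%nat) by lia.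
  assert (Hn1 : (1 <= n)%nat) by lia.
  assert (Hrho0 : 0 < rho).
  { unfold rho. apply Rmult_lt_0_compat; [|lra]. apply Rinv_0_lt_compat.
    apply le_INR in HK1; apply le_INR in Hn1; simpl in *. nra. }
  destruct (fin_delta (fun j d => forall eps, 0 < eps < d ->
      x j <> PE ew (sw - eps) /\ x j <> PE ew (sw + eps)) n) as [dO [HdO HO]].
  { intros j Hj. pose proof (valid_players nV E lam n x Hnash j Hj) as Vj. destruct (x j) as [u|g s].
    - exists 1; split; [lra|]. intros; split; discriminate.
    - destruct (Nat.eq_dec g ew) as [->|N].
      + destruct (Req_dec s sw) as [->|Ns].
        * exists 1; split; [lra|]. intros eps He; split; intros EE; injection EE; intros; lra.
        * exists (Rabs (s - sw)). split; [apply Rabs_pos_lt; lra|].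
          intros eps He; split; intros EE; injection EE; intros; subst;
            unfold Rabs in He; destruct Rcase_abs in He; lra.
      + exists 1; split; [lra|]. intros eps He; split; intros EE; injection EE; intros; congruence. }
  { intros j d d' Hd' H eps He. apply H; lra. }
  set (L := INR (length E)). assert (HL : 0 <= L) by apply pos_INR.
  set (eps := Rmin (Rmin (sw / 2) ((lam ew - sw) / 2)) (Rmin (dO / 2) (rho / (4 * L + 4)))).
  assert (He1 : eps <= sw / 2) by (unfold eps; eapply Rle_trans; [apply Rmin_l|apply Rmin_l]).
  assert (He1' : eps <= (lam ew - sw) / 2) by (unfold eps; eapply Rle_trans; [apply Rmin_l|apply Rmin_r]).
  assert (He2 : eps <= dO / 2) by (unfold eps; eapply Rle_trans; [apply Rmin_r|apply Rmin_l]).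
  assert (He3 : eps <= rho / (4 * L + 4)) by (unfold eps; eapply Rle_trans; [apply Rmin_r|apply Rmin_r]).
  assert (He0 : 0 < eps).
  { unfold eps. apply Rmin_glb_lt; apply Rmin_glb_lt; try lra. apply Rdiv_lt_0_compat; lra. }
  apply (core nV E lam n x i0 Hnet Hnash Hi0 K 2 (fun _ => True)
           (fun e => if Nat.eq_dec e 0 then PE ew (sw - eps) else PE ew (sw + eps)) (2 * eps) rho
           (fun f t => if Nat.eq_dec f ew then ind (sw - eps) (sw + eps) t else 0)).
  - intros e He Qe. destruct (Nat.eq_dec e 0); simpl; split; auto; lra.
  - intros f Hf. destruct (Nat.eq_dec f ew) as [->|N]; cbv beta iota; [apply ind_int; lra | apply ex_RInt_const].
  - intros f Hf. destruct (Nat.eq_dec f ew) as [->|N].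
    + cbv beta iota. destruct (ind_int (sw - eps) (sw + eps) (lam ew)) as [I1 R1]; try lra.
      change (RInt (ind (sw - eps) (sw + eps)) 0 (lam ew) <= 2 * eps). rewrite R1; lra.
    + cbv beta iota. rewrite RInt_zero. lra.
  - intros f t Hf Ht. unfold sh. rewrite (pt_of_int E lam f t Ht).
    apply pointwise_gen; auto.
    + destruct (Nat.eq_dec f ew); [apply ind_nonneg|lra].
    + destruct (Nat.eq_dec f ew) as [->|N].
      * destruct (Rlt_dec (Rabs (t - sw)) eps).
        { left. rewrite ind_one; [lra|]. unfold Rabs in r; destruct Rcase_abs in r; lra. }
        right. intros _. destruct (geo_interior E lam ew sw ew t eps He0) as [H|H].
        { intros; lra. }
        { exists 0%nat; repeat split; auto. }
        { exists 1%nat; repeat split; auto. }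
      * right. intros _. destruct (geo_interior E lam ew sw f t eps He0) as [H|H].
        { intros; congruence. }
        { exists 0%nat; repeat split; auto. }
        { exists 1%nat; repeat split; auto. }
    + intros e He Qe j Hj. destruct (HO j Hj eps ltac:(lra)).
      destruct (Nat.eq_dec e 0); auto.
  - exact Hrho.
  - exact Hrho0.
  - rewrite countP_True. exact Hdeg.
  - assert (L * (2 * eps) <= L * (2 * (rho / (4 * L + 4)))) by (apply Rmult_le_compat_l; lra).
    assert (L * (2 * (rho / (4 * L + 4))) < rho).
    { replace (L * (2 * (rho / (4 * L + 4)))) with (rho * (2 * L / (4 * L + 4))) by (field; lra).
      assert (2 * L / (4 * L + 4) < 1). { apply (Rmult_lt_reg_r (4 * L + 4)); [lra|].
        unfold Rdiv. rewrite Rmult_assoc, Rinv_l by lra. lra. }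
      nra. }
    fold L. lra.
Qed.

End Cases2.

Theorem mainTheorem6 (nV : nat) (E : list (nat * nat)) (lam : nat -> R)
  (n : nat) (x : nat -> Pt) :
  network nV E lam ->
  nash nV E lam n x ->
  vertex_property nV E n x ->
  forall w, valid_pt nV E lam w ->
    (countP (fun i => x i = w) n <= degree E w)%nat.
Proof.
  intros Hnet Hnash _ w Hw.
  destruct (Nat.le_gt_cases (countP (fun i => x i = w) n) (degree E w)) as [H|H]; auto.
  exfalso.
  destruct (countP_exists (fun i => x i = w) n) as [i0 [Hi0 Hx]]; [lia|].
  destruct w as [v|ew sw].
  - simpl in H, Hw. apply (vertex_case nV E lam n x i0 Hnet Hnash Hi0 v); auto.
  - simpl in H, Hw. destruct Hw as [Hew Hsw].
    apply (interior_case nV E lam n x i0 Hnet Hnash Hi0 ew sw); auto.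
Qed.
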